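(* Let $F$ be an algebraically closed field of positive characteristic $p$, and let $\phi \in F(z)$ be a rational function with a single critical point $c \in \mathbb{P}^1(F)$. Then there exist polynomials $q_0, \ldots, q_n \in F[z]$ and a nonzero element $a \in F$ such that $\phi \circ \sigma(z) = [q_0(z^p), q_1(z^p), \ldots, q_n(z^p) + az]$, where $\sigma(z) = z$ if $c = \infty$ and $\sigma(z) = c + 1/z$ otherwise.
   Context: Continued fraction expansion: for $\psi \in F(z)$, repeated division gives unique polynomials $f_0, \ldots, f_n \in F[z]$, with $f_1, \ldots, f_n$ nonconstant, such that $\psi = f_0 + \cfrac{1}{f_1 + \cfrac{1}{\ddots + \cfrac{1}{f_n}}}$, written $\psi = [f_0, \ldots, f_n]$. Critical points: for $x \in F$, choose a fractional linear transformation $\tau$ over $F$ with $\tau(\phi(x)) \neq \infty$; $x$ is a critical point if $\frac{d(\tau\circ\phi)}{dz}(x) = 0$. The point $\infty$ is a critical point if $\frac{d(\tau \circ \phi(1/z))}{dz}\big|_{z=0} = 0$ for such $\tau$ with $\tau(\phi(\infty))\neq\infty$. These notions are independent of $\tau$. *)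

(* Defs.v *)
From HB Require Import structures.
From mathcomp Require Import all_boot all_order all_algebra.
Set Implicit Arguments. Unset Strict Implicit. Unset Printing Implicit Defensive.
Import Order.TTheory GRing.Theory Num.Theory.
Local Open Scope ring_scope.

Notation ratfun F := {fraction {poly F}}.

Section RatFun.
Variable F : fieldType.
Local Notation K := (ratfun F).

Definition rpoly (p : {poly F}) : K := tofrac p.

Definition rz : K := rpoly 'X.

(* composition f(s) for f, s in F(z) (meaningful when s is nonconstant):
   f = N/D with N/D a representative of f, f(s) := N(s)/D(s). *)
Definition rcomp (f s : K) : K :=
  let r := repr f in
  (map_poly (fun a : F => rpoly a%:P) \n_r).[s] / (map_poly (fun a : F => rpoly a%:P) \d_r).[s].

(* g in F(z) is regular (finite) at x in F, with derivative value v at x: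
   g = N/D with D(x) <> 0, and v = (N'(x) D(x) - N(x) D'(x)) / D(x)^2
   (the formal derivative of N/D evaluated at x). *)
Definition deriv_at (g : K) (x v : F) : Prop :=
  exists N D : {poly F}, [/\ D.[x] != 0, g = rpoly N / rpoly D &
    v = (N^`().[x] * D.[x] - N.[x] * D^`().[x]) / D.[x] ^+ 2].

(* tau o g for the fractional linear transformation tau(w) = (a w + b)/(c w + d),
   ad - bc <> 0.  The condition [c g + d != 0] excludes the case where tau o g
   is the constant infinity. *)
Definition mobius_comp (a b c d : F) (g : K) : K :=
  (rpoly a%:P * g + rpoly b%:P) / (rpoly c%:P * g + rpoly d%:P).

(* x in F is a critical point of g: for some fractional linear transformation
   tau with tau(g(x)) <> infinity, d(tau o g)/dz (x) = 0. *)
Definition critical_fin (g : K) (x : F) : Prop :=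
  exists a b c d : F, [/\ a * d - b * c != 0,
    rpoly c%:P * g + rpoly d%:P != 0 & deriv_at (mobius_comp a b c d g) x 0].

(* points of P^1(F): [Some x] is x in F, [None] is infinity *)
Definition critical (phi : K) (x : option F) : Prop :=
  match x with
  | Some x => critical_fin phi x
  | None => critical_fin (rcomp phi rz^-1) 0
  end.

Fixpoint contfrac (s : seq {poly F}) : K :=
  match s with
  | [::] => 0
  | [:: f] => rpoly f
  | f :: s' => rpoly f + (contfrac s')^-1
  end.

Definition sigma (c : option F) : K :=
  match c with
  | None => rz
  | Some c0 => rpoly c0%:P + rz^-1
  end.

End RatFun.

(* Main.v *)
Require Import Defs.
From HB Require Import structures.
From mathcomp Require Import all_boot all_order all_algebra.
From mathcomp Require Import ring zify.
From Stdlib Require Import Lia.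
Import Order.TTheory GRing.Theory Num.Theory.
Local Open Scope ring_scope.
Set Implicit Arguments. Unset Strict Implicit. Unset Printing Implicit Defensive.

Section Frac.
Variable R : idomainType.
Lemma frac_repr (x : {fraction R}) :
  x = tofrac (\n_(repr x)) / tofrac (\d_(repr x)).
Proof.
have hd : \d_(repr x) != 0 by case: (repr x).
suff h : x * tofrac (\d_(repr x)) = tofrac (\n_(repr x)).
  by rewrite -h mulfK ?tofrac_eq0.
rewrite -{1}[x]reprK.
move: hd; case: (repr x) => [[n d] /= hd] _.
unlock tofrac.
transitivity (\pi_({fraction R})%qT (FracField.mulf (@mkRatio _ (n, d) hd) (Ratio d 1))).
  by symmetry; exact: pi_mul.
apply/eqmodP; rewrite /= FracField.equivfE /=.
rewrite /FracField.mulf !numden_Ratio ?mulf_neq0 ?oner_eq0 //=.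
by apply/eqP; ring.
Qed.
End Frac.

Section Main.
Variable F : fieldType.
Local Notation K := (ratfun F).

Definition gC (a : F) : K := rpoly a%:P.
HB.instance Definition _ := GRing.RMorphism.copy gC ((@tofrac {poly F}) \o polyC).

Definition ev (s : K) (P : {poly F}) : K := (map_poly gC P).[s].

Lemma evM s P Q : ev s (P * Q) = ev s P * ev s Q.
Proof. by rewrite /ev rmorphM hornerM. Qed.

Lemma rcomp_frac (N D : {poly F}) s : D != 0 ->
  (forall P, P != 0 -> ev s P != 0) ->
  rcomp (rpoly N / rpoly D) s = ev s N / ev s D.
Proof.
move=> hD hev.
rewrite /rcomp -/gC.
set x := rpoly N / rpoly D.
have hd : \d_(repr x) != 0 by case: (repr x).
have e1 := frac_repr x.
have : rpoly (\n_(repr x)) / rpoly (\d_(repr x)) = rpoly N / rpoly D by rewrite -e1.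
move/eqP; rewrite eqr_div ?tofrac_eq0 // /rpoly -!rmorphM tofrac_eq => /eqP e2.
by apply/eqP; rewrite eqr_div ?hev // -!evM e2.
Qed.

Definition rz' : K := rz F.

Lemma rz_neq0 : rz F != 0.
Proof. by rewrite /rz /rpoly tofrac_eq0 polyX_eq0. Qed.

Lemma horner_Xpoly (P : {poly F}) : (map_poly polyC P).['X] = P.
Proof.
elim/poly_ind: P => [|P c IH]; first by rewrite rmorph0 horner0.
by rewrite rmorphD rmorphM /= map_polyX map_polyC /= hornerD hornerMX IH hornerC.
Qed.

Lemma ev_rz P : ev (rz F) P = rpoly P.
Proof.
rewrite /ev /rz /rpoly.
have -> : map_poly gC P = map_poly (@tofrac {poly F}) (map_poly polyC P).
  by rewrite -map_poly_comp.
by rewrite horner_map /= horner_Xpoly.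
Qed.

Lemma ev_comp s P Q : ev s (P \Po Q) = ev (ev s Q) P.
Proof. by rewrite /ev map_comp_poly horner_comp. Qed.

Definition revp (n : nat) (Q : {poly F}) : {poly F} :=
  \sum_(i < n.+1) Q`_i *: 'X^(n - i).

Lemma ev_rev n (Q : {poly F}) : (size Q <= n.+1)%N ->
  ev (rz F)^-1 Q * (rz F) ^+ n = rpoly (revp n Q).
Proof.
move=> hs; rewrite /ev (horner_coef_wide _ (n:=n.+1)); last by rewrite size_map_poly.
rewrite /revp /rpoly rmorph_sum big_distrl /=; apply: eq_bigr => i _.
rewrite coef_map -mul_polyC rmorphM rmorphXn /= -/(rz F) -/(gC _).
rewrite -mulrA; congr (_ * _).
rewrite -/(rpoly 'X) -/(rz F) exprVn mulrC (expfB_cond (x:= rz F)) //.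
by rewrite (negPf rz_neq0) add0n -ltnS.
Qed.

Lemma revp_coef n (Q : {poly F}) k :
  (revp n Q)`_k = if (k <= n)%N then Q`_(n - k) else 0.
Proof.
rewrite /revp coef_sum.
under eq_bigr => i _ do rewrite coefZ coefXn.
case: leqP => hk.
  have hi : (n - k < n.+1)%N by rewrite ltnS leq_subr.
  rewrite (bigD1 (Ordinal hi)) //= subKn // eqxx mulr1 big1 ?addr0 //.
  move=> i /eqP hne; case: eqP; rewrite ?mulr0 // => e.
  by exfalso; apply: hne; apply: val_inj => /=; have := ltn_ord i; lia.
rewrite big1 // => i _; case: eqP; rewrite ?mulr0 // => e.
by have := ltn_ord i; lia.
Qed.

Lemma revp0 n (Q : {poly F}) : (revp n Q).[0] = Q`_n.
Proof. by rewrite horner_coef0 revp_coef leq0n subn0. Qed.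

Lemma revp_neq0 n (Q : {poly F}) : (size Q <= n.+1)%N -> Q != 0 -> revp n Q != 0.
Proof.
move=> hs hQ; apply/eqP => e.
have := congr1 (fun P : {poly F} => P`_(n - (size Q).-1)) e => /=.
rewrite revp_coef leq_subr coef0 subKn; last by rewrite -ltnS; case: (size Q) hs.
by move/eqP; rewrite -lead_coefE lead_coef_eq0 (negPf hQ).
Qed.

Lemma revpL n a (P Q : {poly F}) : revp n (a *: P + Q) = a *: revp n P + revp n Q.
Proof.
apply/polyP => k; rewrite coefD coefZ !revp_coef coefD coefZ.
by case: ifP; rewrite ?mulr0 ?addr0.
Qed.

Lemma revpXn n k : revp n 'X^k = if (k <= n)%N then 'X^(n - k) else 0 :> {poly F}.
Proof.
apply/polyP => i; rewrite revp_coef coefXn.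
case: (leqP k n) => hk; case: (leqP i n) => hi; rewrite ?coefXn ?coef0 //.
- by congr (_%:R); apply/eqP/eqP; lia.
- by case: eqP => // e; lia.
- by case: eqP => // e; lia.
Qed.

Definition Wr (N D : {poly F}) := N^`() * D - N * D^`().

Definition bil (f : {poly F} -> {poly F} -> {poly F}) :=
  (forall a P Q R, f (a *: P + Q) R = a *: f P R + f Q R) /\
  (forall a P Q R, f R (a *: P + Q) = a *: f R P + f R Q).

Lemma Wr_bil : bil Wr.
Proof.
split=> a P Q R; rewrite /Wr !derivD !derivZ.
  by rewrite -!mul_polyC; ring.
by rewrite -!mul_polyC; ring.
Qed.

Lemma lin_sum (f : {poly F} -> {poly F}) :
  (forall a P Q, f (a *: P + Q) = a *: f P + f Q) ->
  forall m (c : nat -> F), f (\sum_(i < m) c i *: 'X^i) = \sum_(i < m) c i *: f 'X^i.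
Proof.
move=> hf.
have f0 : f 0 = 0.
  have := hf (-1) 0 0; rewrite scaler0 addr0 scaleN1r => e.
  by rewrite addNr in e.
elim=> [|m IH] c; first by rewrite !big_ord0.
by rewrite !big_ord_recr /= addrC hf IH addrC.
Qed.

Lemma poly_sum_def n (P : {poly F}) : (size P <= n)%N -> P = \sum_(i < n) P`_i *: 'X^i.
Proof.
move=> hs; apply/polyP => k; rewrite coef_sum.
under eq_bigr => i _ do rewrite coefZ coefXn.
case: (ltnP k n) => hk.
  rewrite (bigD1 (Ordinal hk)) //= eqxx mulr1 big1 ?addr0 // => i /eqP hne.
  case: eqP; rewrite ?mulr0 // => e; exfalso; apply: hne; exact: val_inj.
rewrite big1; first by apply: nth_default; exact: leq_trans hk.
by move=> i _; case: eqP; rewrite ?mulr0 // => e; have := ltn_ord i; lia.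
Qed.

Lemma bil_ext f g n : bil f -> bil g ->
  (forall i j, (i <= n)%N -> (j <= n)%N -> f 'X^i 'X^j = g 'X^i 'X^j) ->
  forall P Q : {poly F}, (size P <= n.+1)%N -> (size Q <= n.+1)%N -> f P Q = g P Q.
Proof.
move=> [fl fr] [gl gr] hm P Q hP hQ.
rewrite (poly_sum_def hP) (poly_sum_def hQ).
set sQ := \sum_(i < n.+1) Q`_i *: 'X^i.
rewrite (@lin_sum (f^~ sQ) (fun a P0 Q0 => fl a P0 Q0 sQ)).
rewrite (@lin_sum (g^~ sQ) (fun a P0 Q0 => gl a P0 Q0 sQ)).
apply: eq_bigr => i _; congr (_ *: _).
rewrite (@lin_sum (f 'X^i) (fun a P0 Q0 => fr a P0 Q0 _)).
rewrite (@lin_sum (g 'X^i) (fun a P0 Q0 => gr a P0 Q0 _)).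
apply: eq_bigr => j _; congr (_ *: _).
by apply: hm; rewrite -ltnS.
Qed.

Lemma Wr_Xn i j : Wr 'X^i 'X^j = (i%:R - j%:R) *: 'X^((i + j).-1) :> {poly F}.
Proof.
rewrite /Wr !derivXn.
case: i => [|i]; case: j => [|j] /=; idtac.
- by rewrite !mulr0n mul0r mulr0 subrr subrr scale0r.
- by rewrite mulr0n mul0r sub0r expr0 mul1r -scaler_nat sub0r scaleNr.
- by rewrite mulr0n mulr0 subr0 addn0 expr0 mulr1 -scaler_nat subr0.
rewrite mulrnAl mulrnAr -!exprD scalerBl !scaler_nat.
by rewrite addnS addSn.
Qed.

Lemma revpZ n a (P : {poly F}) : revp n (a *: P) = a *: revp n P.
Proof.
apply/polyP => k; rewrite coefZ !revp_coef coefZ.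
by case: ifP; rewrite ?mulr0.
Qed.

Lemma Wr_size n (P Q : {poly F}) : (size P <= n.+1)%N -> (size Q <= n.+1)%N ->
  (size (Wr P Q) <= ((n + n).-2).+1)%N.
Proof.
move=> hP hQ.
suff -> : Wr P Q = \poly_(k < ((n + n).-2).+1) (Wr P Q)`_k by apply: size_poly.
pose g := fun P Q => \poly_(k < ((n + n).-2).+1) (Wr P Q)`_k.
apply: (@bil_ext Wr g n Wr_bil) => //.
  have [wl wr] := Wr_bil.
  split=> a P0 Q0 R0; apply/polyP => k; rewrite /g ?wl ?wr coefD coefZ !coef_poly;
    by case: ifP => _; rewrite ?mulr0 ?addr0 // coefD coefZ.
move=> i j hi hj; apply/polyP => k; rewrite /g coef_poly Wr_Xn coefZ coefXn.
case: ifP => // hk; case: eqP; rewrite ?mulr0 // => ek.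
have [eij|nij] := eqVneq i j; first by rewrite eij subrr mul0r.
by exfalso; move/negbT: hk; rewrite -leqNgt; lia.
Qed.

Lemma Wr_rev n (P Q : {poly F}) : (size P <= n.+1)%N -> (size Q <= n.+1)%N ->
  Wr (revp n P) (revp n Q) = - revp ((n + n).-2) (Wr P Q).
Proof.
move=> hP hQ.
pose f := fun P Q => Wr (revp n P) (revp n Q).
pose g := fun P Q => - revp ((n + n).-2) (Wr P Q).
have [wl wr] := Wr_bil.
apply: (@bil_ext f g n) => //.
- by split=> a P0 Q0 R0; rewrite /f revpL ?wl ?wr.
- split=> a P0 Q0 R0; rewrite /g ?wl ?wr revpL opprD scalerN //.
move=> i j hi hj; rewrite /f /g !revpXn hi hj Wr_Xn Wr_Xn revpZ revpXn.
have [eij|nij] := eqVneq i j; first by rewrite eij !subrr !scale0r oppr0.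
have -> : ((i + j).-1 <= (n + n).-2)%N.
  by move: nij; rewrite neq_ltn => /orP[] h; lia.
rewrite -scaleNr; congr (_ *: 'X^_).
  by rewrite !natrB //; ring.
by move: nij; rewrite neq_ltn => /orP[] h; lia.
Qed.

Lemma Wr_comp (P Q : {poly F}) c :
  Wr (P \Po ('X + c%:P)) (Q \Po ('X + c%:P)) = Wr P Q \Po ('X + c%:P).
Proof.
by rewrite /Wr !deriv_comp derivD derivX derivC addr0 !mulr1 comp_polyB !comp_polyM.
Qed.

Lemma rpolyC0 : rpoly (0 : F)%:P = 0.
Proof. by rewrite /rpoly polyC0 rmorph0. Qed.
Lemma rpolyC1 : rpoly (1 : F)%:P = 1.
Proof. by rewrite /rpoly polyC1 rmorph1. Qed.

Lemma L1 (N D : {poly F}) x : D != 0 -> (N.[x] != 0) || (D.[x] != 0) ->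
  (Wr N D).[x] = 0 -> critical_fin (rpoly N / rpoly D) x.
Proof.
move=> hD hnd hW.
have [hDx|hDx] := eqVneq D.[x] 0; last first.
  exists 1, 0, 0, 1; split.
  - by rewrite mulr1 mulr0 subr0 oner_eq0.
  - by rewrite rpolyC0 rpolyC1 mul0r add0r oner_eq0.
  rewrite /mobius_comp rpolyC0 rpolyC1 mul0r add0r mul1r addr0 divr1.
  exists N, D; split=> //.
  by move: hW; rewrite /Wr !hornerE => ->; rewrite mul0r.
rewrite hDx eqxx orbF in hnd.
have hN : N != 0 by apply: contraNneq hnd => ->; rewrite horner0.
have hg : rpoly N / rpoly D != 0.
  by rewrite mulf_neq0 ?invr_eq0 /rpoly ?tofrac_eq0.
exists 0, 1, 1, 0; split.
- by rewrite mulr0 mul1r sub0r oppr_eq0 oner_eq0.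
- by rewrite rpolyC0 rpolyC1 mul1r addr0.
rewrite /mobius_comp rpolyC0 rpolyC1 mul0r add0r addr0 !mul1r invf_div.
exists D, N; split=> //.
move: hW; rewrite /Wr !hornerE hDx mulr0 sub0r => /eqP.
rewrite oppr_eq0 mulf_eq0 (negPf hnd) /= => /eqP ->.
by rewrite !mul0r subrr mul0r.
Qed.

Lemma deriv0_comp p (hp : p \in [pchar F]) (P : {poly F}) :
  P^`() = 0 -> P = (\poly_(i < size P) P`_(i * p)) \Po 'X^p.
Proof.
move=> hd.
have p0 : (0 < p)%N by apply: prime_gt0; apply: pcharf_prime hp.
apply/polyP => k; rewrite coef_comp_poly_Xn // coef_poly.
case: ifP => hk.
  rewrite divnK //; case: ltnP => // hs.
  by apply: nth_default; apply: leq_trans hs (leq_div _ _).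
case: k hk => [|k] hk; first by rewrite dvdn0 in hk.
have := congr1 (fun Q : {poly F} => Q`_k) hd => /=.
rewrite coef_deriv coef0 -mulr_natr => /eqP; rewrite mulf_eq0.
by rewrite -(dvdn_pcharf hp) hk orbF => /eqP.
Qed.

Definition cfl p (q : seq {poly F}) a :=
  rcons [seq (q`_i \Po 'X^p) | i <- iota 0 (size q).-1] ((last 0 q \Po 'X^p) + a *: 'X).

Lemma cfl_cons p x q a : q != [::] -> cfl p (x :: q) a = (x \Po 'X^p) :: cfl p q a.
Proof.
case: q => // y q _; rewrite /cfl /=; congr (_ :: _); congr rcons.
rewrite (iotaDl 1 0) -map_comp; apply: eq_map => i /=.
by [].
Qed.

Lemma cfl_neq0 p q a : cfl p q a != [::].
Proof. by rewrite /cfl; case: [seq _ | _ <- _]. Qed.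

Lemma contfrac_cons (f : {poly F}) l : l != [::] -> contfrac (f :: l) = rpoly f + (contfrac l)^-1.
Proof. by case: l. Qed.

Lemma size_deriv_le (P : {poly F}) : (size P^`() <= (size P).-1)%N.
Proof.
have [->|hP] := eqVneq P 0; first by rewrite deriv0 size_poly0.
by have := lt_size_deriv hP; case: (size P).
Qed.

Lemma euclid p (hp : p \in [pchar F]) n0 : forall (D N : {poly F}) a,
  (size D <= n0)%N -> D != 0 -> Wr N D = a%:P -> a != 0 ->
  exists (q : seq {poly F}) (a' : F), [/\ (0 < size q)%N, a' != 0,
    (forall i, (0 < i < (size q).-1)%N -> (1 < size (nth 0%R q i))%N),
    ((size D < size N)%N -> (1 < size q)%N -> (1 < size (nth 0%R q 0))%N) &
    rpoly N / rpoly D = contfrac (cfl p q a')].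
Proof.
elim: n0 => [|n0 IH] D N a hs hD hW ha.
  by move: hs; rewrite leqn0 size_poly_eq0 (negPf hD).
have [/eqP s1|s2] := eqVneq (size D) 1%N.
  have [d hd eD] := size_poly1P _ s1.
  have hN' : N^`() = (a / d)%:P.
    move: hW; rewrite /Wr eD derivC mulr0 subr0 => e.
    have hd' : d%:P != 0 :> {poly F} by rewrite polyC_eq0.
    by apply: (mulIf hd'); rewrite e -polyCM divfK.
  set M := N - (a / d) *: 'X.
  have hM : M^`() = 0 by rewrite /M derivB derivZ derivX hN' alg_polyC subrr.
  set Q := \poly_(i < size M) M`_(i * p).
  have eM : M = Q \Po 'X^p by apply: deriv0_comp.
  exists [:: d^-1 *: Q], (a / d / d); split=> //.
  - by rewrite !mulf_neq0 ?invr_eq0.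
  - by case=> [|[|i]].
  rewrite /cfl /= eD.
  suff -> : N = d%:P * ((d^-1 *: Q \Po 'X^p) + (a / d / d) *: 'X).
    by rewrite /rpoly rmorphM /= mulrC mulKf // tofrac_eq0 polyC_eq0.
  rewrite comp_polyZ -eM mulrDr !mul_polyC !scalerA mulfV // scale1r.
  have -> : d * (a / d / d) = a / d by field.
  by rewrite /M subrK.
have s2' : (1 < size D)%N.
  by rewrite ltn_neqAle eq_sym s2 size_poly_gt0.
set q0 := N %/ D; set R := N %% D.
have hN : N = q0 * D + R by apply: divp_eq.
have hR : (size R < size D)%N by rewrite ltn_modp.
have hW2 : Wr N D = q0^`() * D ^+ 2 + Wr R D.
  by rewrite {1}hN /Wr derivD derivM; ring.
have hq0 : q0^`() = 0.
  apply/eqP/negP => hq; move/negP: hq => hq.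
  have e : q0^`() * D ^+ 2 = a%:P - Wr R D by rewrite -hW hW2 addrK.
  have s1 : size (q0^`() * D ^+ 2) = (size q0^`() + size (D * D)).-1.
    by rewrite expr2 size_mul // mulf_neq0.
  have s3 : size (D * D) = (size D + size D).-1 by rewrite size_mul.
  have s4 : (size (a%:P - Wr R D)%R <= maxn 1 (size (Wr R D)))%N.
    by apply: leq_trans (size_add _ _) _; rewrite size_opp geq_max leq_max size_polyC_leq1 leq_max leqnn orbT.
  have s5 : (size (Wr R D) <= maxn (size (R^`() * D)%R) (size (R * D^`())%R))%N.
    by rewrite /Wr; apply: leq_trans (size_add _ _) _; rewrite size_opp.
  have s6 := size_mul_leq R^`() D.
  have s7 := size_mul_leq R D^`().
  have s8 := size_deriv_le R.
  have s9 := size_deriv_le D.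
  have s10 : (0 < size q0^`())%N by rewrite size_poly_gt0.
  move: s4 s5; rewrite -e s1 s3 => s4 s5.
  move: s4 s5 s6 s7 s8 s9 s10 hR s2'.
  set x1 := size (Wr R D); set x2 := size (R^`() * D); set x3 := size (R * D^`()).
  set y1 := size R^`(); set y2 := size D^`(); set z := size q0^`().
  set sR := size R; set sD := size D.
  lia.
set Q0 := \poly_(i < size q0) q0`_(i * p).
have eq0 : q0 = Q0 \Po 'X^p by apply: deriv0_comp.
have hWR : Wr R D = a%:P by rewrite -hW hW2 hq0 mul0r add0r.
have hR0 : R != 0.
  apply: contra_eq_neq hWR => ->.
  by rewrite /Wr deriv0 !mul0r subrr eq_sym polyC_eq0.
have hWD : Wr D R = (- a)%:P by rewrite polyCN -hWR /Wr; ring.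
have hsR : (size R <= n0)%N by rewrite -ltnS; apply: leq_trans hR hs.
have hna : - a != 0 by rewrite oppr_eq0.
have [q' [a' [h0 ha' hi hc heq]]] := IH R D (- a) hsR hR0 hWD hna.
exists (Q0 :: q'), a'; split=> //.
- move=> i /andP[i0 i1]; case: i i0 i1 => [|[|i]] // _ /= h.
    by apply: hc.
  by apply: (hi i.+1); apply/andP; split=> //; lia.
- move=> hDN _.
  have : (1 < size q0)%N.
    rewrite /q0 size_divp // ltn_subRL addn1 prednK // ltnW //.
  rewrite eq0; case: (leqP (size Q0) 1) => // /size1_polyC ->.
  by rewrite comp_polyC => h; move: (size_polyC_leq1 (Q0`_0)); rewrite leqNgt h.
have hq' : q' != [::] by case: q' h0 {hi hc heq}.
rewrite cfl_cons // contfrac_cons ?cfl_neq0 // -heq -eq0 invf_div.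
have hDf : rpoly D != 0 by rewrite /rpoly tofrac_eq0.
have hRf : rpoly R != 0 by rewrite /rpoly tofrac_eq0.
rewrite {1}hN /rpoly rmorphD rmorphM /= -!/(rpoly _).
by rewrite mulrDl (mulfK hDf).
Qed.

Lemma ev_T c0 (P : {poly F}) :
  ev (rpoly c0%:P + (rz F)^-1) P = ev (rz F)^-1 (P \Po ('X + c0%:P)).
Proof.
rewrite ev_comp; congr (ev _ _).
rewrite /ev rmorphD /= map_polyX map_polyC /= hornerD hornerX hornerC.
by rewrite addrC.
Qed.

Lemma ev_T_rev c0 n (P : {poly F}) : (size P <= n.+1)%N ->
  ev (rpoly c0%:P + (rz F)^-1) P * (rz F) ^+ n = rpoly (revp n (P \Po ('X + c0%:P))).
Proof.
move=> hs; rewrite ev_T ev_rev //.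
by rewrite size_comp_poly2 // size_XaddC.
Qed.

Lemma ev_T_inj c0 (P : {poly F}) : P != 0 -> ev (rpoly c0%:P + (rz F)^-1) P != 0.
Proof.
move=> hP.
have hs : (size P <= (size P).-1.+1)%N by rewrite -ltnS; case: (size P).
have := ev_T_rev c0 hs.
have hPT : P \Po ('X + c0%:P) != 0.
  by rewrite -size_poly_eq0 size_comp_poly2 ?size_XaddC // size_poly_eq0.
have : rpoly (revp (size P).-1 (P \Po ('X + c0%:P))) != 0.
  rewrite /rpoly tofrac_eq0 revp_neq0 //.
  by rewrite size_comp_poly2 // size_XaddC.
move=> h1 h2; apply: contraNneq h1 => e.
by rewrite -h2 e mul0r.
Qed.

Lemma rcomp_sigma c0 n (N D : {poly F}) : (size N <= n.+1)%N -> (size D <= n.+1)%N ->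
  D != 0 ->
  rcomp (rpoly N / rpoly D) (rpoly c0%:P + (rz F)^-1) =
  rpoly (revp n (N \Po ('X + c0%:P))) / rpoly (revp n (D \Po ('X + c0%:P))).
Proof.
move=> hN hD hD0.
rewrite rcomp_frac //; last by move=> P; apply: ev_T_inj.
rewrite -(ev_T_rev c0 hN) -(ev_T_rev c0 hD).
have hz : (rz F) ^+ n != 0 by rewrite expf_neq0 // rz_neq0.
by rewrite -mulf_div divff // mulr1.
Qed.
End Main.

Section Closed.
Variable F : closedFieldType.

Lemma nf0 (V : {poly F}) : (forall x, V.[x] != 0) -> V = (V`_0)%:P /\ V`_0 != 0.
Proof.
move=> h.
have s1 : size V == 1%N.
  apply/negPn/negP => /closed_rootP [x hx].
  by move: (h x); rewrite -/(root V x) hx.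
have e : V = (V`_0)%:P by apply: size1_polyC; rewrite (eqP s1).
split=> //; apply/eqP => e0.
by move: (h 0); rewrite e e0 hornerC eqxx.
Qed.

Lemma nfX (V : {poly F}) : V != 0 -> (forall x, x != 0 -> V.[x] != 0) ->
  V = lead_coef V *: 'X^((size V).-1).
Proof.
move=> hV h.
have [r er] := closed_field_poly_normal V.
have hr : all (fun z => z == 0) r.
  apply/allP => z zr; apply/negPn/negP => hz.
  move: (h z hz); rewrite {1}er hornerZ.
  move: (root_prod_XsubC r z); rewrite zr /root => /eqP ->.
  by rewrite mulr0 eqxx.
have ep : \prod_(z <- r) ('X - z%:P) = 'X^(size r).
  elim: r hr {er} => [|z r IH] /=; first by rewrite big_nil expr0.
  by move=> /andP[/eqP -> hr]; rewrite big_cons IH // polyC0 subr0 exprS.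
rewrite ep in er.
have -> : (size V).-1 = size r.
  by rewrite {1}er size_scale ?lead_coef_eq0 // size_polyXn.
exact: er.
Qed.
End Closed.

Unset Implicit Arguments.
Set Strict Implicit.
Theorem corollary1p2 (F : closedFieldType) (p : nat) (hp : p \in [pchar F])
    (phi : ratfun F) (c : option F)
    (hc : forall x : option F, critical phi x <-> x = c) :
  exists (q : seq {poly F}) (a : F),
    [/\ (0 < size q)%N, a != 0,
      (forall i, (0 < i < (size q).-1)%N -> (1 < size (nth 0%R q i))%N) &
      rcomp phi (sigma c) =
        contfrac (rcons [seq (q`_i \Po 'X^p) | i <- iota 0 (size q).-1]
                        ((last 0 q \Po 'X^p) + a *: 'X))].
Proof.
suff [N2 [D2 [k [hD2 hW2 hk he]]]] : exists N2 D2 k, [/\ D2 != 0, Wr N2 D2 = k%:P, k != 0 &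
    rcomp phi (sigma c) = rpoly N2 / rpoly D2].
  have [q [a [h0 ha hi _ heq]]] := euclid hp (leqnn (size D2)) hD2 hW2 hk.
  by exists q, a; split=> //; rewrite he heq.
set n0 := \n_(repr phi); set d0 := \d_(repr phi).
have hd0 : d0 != 0 by rewrite /d0; case: (repr phi).
set g := gcdp n0 d0.
have hg : g != 0 by rewrite gcdp_eq0 negb_and hd0 orbT.
set N := n0 %/ g; set D := d0 %/ g.
have hcop : coprimep N D by apply: coprimep_div_gcd; rewrite hd0 orbT.
have en : n0 = N * g by rewrite divpK // dvdp_gcdl.
have ed : d0 = D * g by rewrite divpK // dvdp_gcdr.
have hD : D != 0 by apply: contra_neq hd0; rewrite ed => ->; rewrite mul0r.
have hphi : phi = rpoly N / rpoly D.
  rewrite {1}(frac_repr phi) -/n0 -/d0 en ed /rpoly !rmorphM /=.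
  by rewrite -mulf_div divff ?mulr1 // tofrac_eq0.
have hnd x : (N.[x] != 0) || (D.[x] != 0).
  have [hx|hx] := eqVneq N.[x] 0; last by [].
  by rewrite /= (coprimep_root hcop) // /root hx.
have hW x : Some x <> c -> (Wr N D).[x] != 0.
  move=> hxc; apply/eqP => h0; apply: hxc; apply/hc => /=.
  by rewrite hphi; apply: L1.
case: c hc hW => [c0|] hc hW; last first.
  have [eW hk] := nf0 (fun x => hW x (fun e => ltac:(discriminate e))).
  exists N, D, (Wr N D)`_0; split=> //.
  rewrite /sigma hphi rcomp_frac //; last by move=> P hP; rewrite ev_rz /rpoly tofrac_eq0.
  by rewrite !ev_rz.
have hW' x : x != c0 -> (Wr N D).[x] != 0.
  by move=> hx; apply: hW => -[e]; rewrite e eqxx in hx.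
set n := (maxn (size N) (size D)).-1.
have hmax : (0 < maxn (size N) (size D))%N by rewrite leq_max !size_poly_gt0 hD orbT.
have hsN : (size N <= n.+1)%N by rewrite /n prednK // leq_maxl.
have hsD : (size D <= n.+1)%N by rewrite /n prednK // leq_maxr.
set m := (n + n).-2.
set W := Wr N D.
have hinf : W`_m != 0.
  have hnc : ~ critical phi None by move/hc.
  have hchi : rcomp phi (rz F)^-1 = rpoly (revp n N) / rpoly (revp n D).
    have := rcomp_sigma 0 hsN hsD hD.
    by rewrite rpolyC0 add0r polyC0 addr0 !comp_polyXr -hphi.
  have hrD : revp n D != 0 by apply: revp_neq0.
  have hnd0 : ((revp n N).[0] != 0) || ((revp n D).[0] != 0).
    rewrite !revp0; case/orP: (leq_total (size N) (size D)) => h.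
      by rewrite /n (maxn_idPr h) -lead_coefE lead_coef_eq0 hD orbT.
    have hN0 : N != 0.
      rewrite -size_poly_eq0 -lt0n; apply: leq_trans h; by rewrite size_poly_gt0.
    by rewrite /n (maxn_idPl h) -lead_coefE lead_coef_eq0 hN0.
  apply/negP => /eqP h0; apply: hnc; rewrite /critical hchi; apply: L1 => //.
  by rewrite Wr_rev // hornerN revp0 -/W h0 oppr0.
have hsW : (size W <= m.+1)%N by apply: Wr_size.
have hsW' : size W = m.+1.
  apply/eqP; rewrite eqn_leq hsW /= ltnNge; apply: contra hinf => h.
  by rewrite nth_default.
set T := 'X + c0%:P.
set V := W \Po T.
have hV : Wr (N \Po T) (D \Po T) = V by rewrite Wr_comp.
have hsV : size V = m.+1 by rewrite size_comp_poly2 ?size_XaddC.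
have hlV : lead_coef V = W`_m.
  by rewrite lead_coef_comp ?size_XaddC // lead_coefXaddC expr1n mulr1 lead_coefE hsW'.
have hV0 : V != 0 by rewrite -size_poly_eq0 hsV.
have hVx x : x != 0 -> V.[x] != 0.
  move=> hx; rewrite /V horner_comp /T; have -> : ('X + c0%:P).[x] = x + c0 by rewrite !hornerE.
  apply: hW'.
  apply: contra hx => /eqP e; apply/eqP; by rewrite -(addrK c0 x) e subrr.
have eV := nfX hV0 hVx.
rewrite hlV hsV /= in eV.
have hsNT : (size (N \Po T) <= n.+1)%N by rewrite size_comp_poly2 ?size_XaddC.
have hsDT : (size (D \Po T) <= n.+1)%N by rewrite size_comp_poly2 ?size_XaddC.
exists (revp n (N \Po T)), (revp n (D \Po T)), (- W`_m); split.
- apply: revp_neq0 => //.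
  by rewrite -size_poly_eq0 size_comp_poly2 ?size_XaddC // size_poly_eq0.
- rewrite Wr_rev // -/m hV eV revpZ revpXn leqnn subnn expr0.
  by rewrite alg_polyC polyCN.
- by rewrite oppr_eq0.
by rewrite /sigma hphi (rcomp_sigma c0 hsN hsD hD).
Qed.
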